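(* Let $n\in\{2,6,10,\dots\}$ and consider $f_{n+4}$ on $\{0,1\}^{n+4}$. (a) At any vertex with $x_{n+1}=x_{n+2}=1$, changing $x_{n+1}$ or $x_{n+2}$ to $0$ strictly decreases $f_{n+4}$; hence an increasing path that enters the subcube $\{x_{n+1}=x_{n+2}=1\}$ never leaves it. (b) At any vertex with $x_{n+3}=x_{n+4}=1$, changing $x_{n+3}$ or $x_{n+4}$ to $0$ strictly decreases $f_{n+4}$; hence an increasing path that enters the subcube $\{x_{n+3}=x_{n+4}=1\}$ never leaves it.
   Context: For $n\in\{2,6,10,\dots\}$ define polynomials $f_n$ in variables $x_1,\dots,x_n$ (evaluated on $\{0,1\}^n$) recursively. Set $f_2(x_1,x_2):=x_1+x_2$. For $n\in\{2,6,10,\dots\}$, write $\mathbf{x}=(x_1,\dots,x_n)$, $S:=\sum_{i=1}^n x_i$, let $M_n:=\max_{\{0,1\}^n} f_n-\min_{\{0,1\}^n} f_n+1$, and define $f_{n+4}(\mathbf{x},x_{n+1},x_{n+2},x_{n+3},x_{n+4}) := f_n(\mathbf{x}) - M_n n^2 x_{n+1} + M_n(n+1) S x_{n+1} - x_{n+2} - 2M_n n S x_{n+2} + 2M_n n(n+2) x_{n+1}x_{n+2} - 4 S x_{n+3} + 2x_{n+1}x_{n+3} + 2x_{n+2}x_{n+3} - 3x_{n+3} + (M_n(n-1)+4) S x_{n+4} + 6M_n n^2 x_{n+3}x_{n+4} - 5M_n n^2 x_{n+4}$. An increasing path is a sequence of vertices of the hypercube, consecutive ones differing in exactly one coordinate,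 along which the function value strictly increases. *)

(* Defs.v *)
From mathcomp Require Import all_boot all_order all_algebra.
Set Implicit Arguments. Unset Strict Implicit. Unset Printing Implicit Defensive.
Import Order.TTheory GRing.Theory Num.Theory.
Local Open Scope ring_scope.

(* Vertices of the hypercube {0,1}^N, coordinates 0-indexed:
   the paper's x_i is coordinate (i-1). *)
Definition vertex (N : nat) := {ffun 'I_N -> bool}.

(* Read coordinate i (as a nat) of a vertex; false outside the range. *)
Definition vcoord (N : nat) (v : vertex N) (i : nat) : bool :=
  if insub i is Some j then v j else false.

Definition b2z (b : bool) : int := (nat_of_bool b)%:Z.

(* f_{4k+2} as a function of an assignment x : nat -> bool (only the first
   4k+2 coordinates are read). *)
Fixpoint fpoly (k : nat) : (nat -> bool) -> int :=
  match k with
  | 0 => fun x => b2z (x 0%N) + b2z (x 1%N)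
  | k'.+1 =>
    let g := fpoly k' in
    let n := (4 * k' + 2)%N in
    let g0 := g (fun _ => false) in
    let mx := \big[Num.max/g0]_(v : vertex n) g (vcoord v) in
    let mn := \big[Num.min/g0]_(v : vertex n) g (vcoord v) in
    let M := mx - mn + 1 in
    fun x =>
      let nz : int := n%:Z in
      let S : int := \sum_(i < n) b2z (x i) in
      let a := b2z (x n) in
      let b := b2z (x n.+1) in
      let c := b2z (x n.+2) in
      let d := b2z (x n.+3) in
      g x - M * nz ^+ 2 * a + M * (nz + 1) * S * a - b
        - 2 * M * nz * S * b + 2 * M * nz * (nz + 2) * a * b
        - 4 * S * c + 2 * a * c + 2 * b * c - 3 * c
        + (M * (nz - 1) + 4) * S * d + 6 * M * nz ^+ 2 * c * d
        - 5 * M * nz ^+ 2 * d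
  end.

Definition f (k : nat) (v : vertex (4 * k + 2)) : int := fpoly k (vcoord v).

Definition vflip (N : nat) (v : vertex N) (i : nat) : vertex N :=
  [ffun j : 'I_N => if nat_of_ord j == i then ~~ v j else v j].

Definition adjacent (N : nat) (v w : vertex N) : bool :=
  [exists j : 'I_N, w == vflip v j].

Definition incr_step (N : nat) (F : vertex N -> int) : rel (vertex N) :=
  fun v w => adjacent v w && (F v < F w).

Definition increasing_path (N : nat) (F : vertex N -> int) (p : seq (vertex N)) : bool :=
  sorted (incr_step F) p.

Definition vzero (N : nat) : vertex N := [ffun => false].

(* Main.v *)
Require Import Defs.
From mathcomp Require Import all_boot all_order all_algebra.
From mathcomp Require Import zify ring lra.
Import Order.TTheory GRing.Theory Num.Theory.
Local Open Scope ring_scope.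

Definition Mk (k : nat) : int :=
  let g := fpoly k in
  let n := (4 * k + 2)%N in
  let g0 := g (fun _ => false) in
  let mx := \big[Num.max/g0]_(v : vertex n) g (vcoord v) in
  let mn := \big[Num.min/g0]_(v : vertex n) g (vcoord v) in
  mx - mn + 1.

Lemma fpolyS k x : fpoly k.+1 x =
  let n := (4 * k + 2)%N in
  let M := Mk k in
      let nz : int := n%:Z in
      let S : int := \sum_(i < n) b2z (x i) in
      let a := b2z (x n) in
      let b := b2z (x n.+1) in
      let c := b2z (x n.+2) in
      let d := b2z (x n.+3) in
      fpoly k x - M * nz ^+ 2 * a + M * (nz + 1) * S * a - b
        - 2 * M * nz * S * b + 2 * M * nz * (nz + 2) * a * b
        - 4 * S * c + 2 * a * c + 2 * b * c - 3 * c
        + (M * (nz - 1) + 4) * S * d + 6 * M * nz ^+ 2 * c * d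
        - 5 * M * nz ^+ 2 * d.
Proof. by []. Qed.

Lemma Mk_ge1 k : 1 <= Mk k.
Proof.
rewrite /Mk /=.
set g0 := fpoly k (fun _ => false).
have h1 : g0 <= \big[Num.max/g0]_(v : vertex (4 * k + 2)) fpoly k (vcoord v).
  apply: (big_rec (fun y => g0 <= y)) => // i y _ hy; by rewrite le_max hy orbT.
have h2 : \big[Num.min/g0]_(v : vertex (4 * k + 2)) fpoly k (vcoord v) <= g0.
  apply: (big_rec (fun y => y <= g0)) => // i y _ hy; by rewrite ge_min hy orbT.
lra.
Qed.

Lemma fpoly_ext k x y : (forall i, (i < 4 * k + 2)%N -> x i = y i) ->
  fpoly k x = fpoly k y.
Proof.
elim: k x y => [|k IH] x y H.
  by rewrite /= !H.
rewrite !fpolyS /= (IH x y); last by move=> i hi; apply: H; lia.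
rewrite (eq_bigr (fun i : 'I__ => b2z (y i))); last by move=> i _; rewrite H //; case: i => /=; lia.
by rewrite !H //; lia.
Qed.

Lemma vcoord_flip N (v : vertex N) m i : (m < N)%N ->
  vcoord (vflip v m) i = (i == m) (+) vcoord v i.
Proof.
move=> hm; rewrite /vcoord; case: insubP => [j _ <-|].
  by rewrite ffunE; case: (nat_of_ord j == m).
rewrite -leqNgt => hi; have : i != m by apply/eqP => E; subst; lia.
by move/negbTE => ->.
Qed.

Lemma b2z_bound b : 0 <= b2z b <= 1.
Proof. by case: b. Qed.
Lemma flip_decomp k (v : vertex (4 * k.+1 + 2)) m :
  (4 * k + 2 <= m)%N -> (m < 4 * k.+1 + 2)%N ->
  let n := (4 * k + 2)%N in
  let x := vcoord v in
  let x' := fun i => (i == m) (+) x i in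
  f (vflip v m) =
      let M := Mk k in
      let nz : int := n%:Z in
      let S : int := \sum_(i < n) b2z (x i) in
      let a := b2z (x' n) in
      let b := b2z (x' n.+1) in
      let c := b2z (x' n.+2) in
      let d := b2z (x' n.+3) in
      fpoly k x - M * nz ^+ 2 * a + M * (nz + 1) * S * a - b
        - 2 * M * nz * S * b + 2 * M * nz * (nz + 2) * a * b
        - 4 * S * c + 2 * a * c + 2 * b * c - 3 * c
        + (M * (nz - 1) + 4) * S * d + 6 * M * nz ^+ 2 * c * d
        - 5 * M * nz ^+ 2 * d.
Proof.
move=> h1 h2 n x x'; rewrite /f fpolyS /=.
have E : forall i, vcoord (vflip v m) i = x' i by move=> i; rewrite vcoord_flip.
rewrite !E (@fpoly_ext k _ x); last first.
  by move=> i hi; rewrite E /x'; have -> : (i == m) = false by apply/eqP; lia.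
congr (_ + _); rewrite (eq_bigr (fun i : 'I__ => b2z (x i))) //.
by move=> [i hi] _; rewrite E /x'; have -> : (i == m) = false by apply/eqP; lia.
Qed.

Lemma partA k (v : vertex (4 * k.+1 + 2)) :
  let n := (4 * k + 2)%N in
  vcoord v n -> vcoord v n.+1 ->
  f (vflip v n) < f v /\ f (vflip v n.+1) < f v.
Proof.
move=> n ha hb.
have HM := Mk_ge1 k.
set S := \sum_(i < n) b2z (vcoord v i).
have HS0 : 0 <= S by apply: sumr_ge0 => i _; case: (vcoord v i).
have HS1 : S <= n%:Z.
  have : S <= \sum_(i < n) 1 by apply: ler_sum => i _; case: (vcoord v i).
  by rewrite sumr_const card_ord -natz.
have Hn : 2 <= n%:Z by rewrite /n; lia.
split.
- rewrite flip_decomp /= ?eqxx; try lia.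
  rewrite /f fpolyS /= -/n -/S ha hb.
  have -> : (n.+1 == n) = false by lia.
  have -> : (n.+2 == n) = false by lia.
  have -> : (n.+3 == n) = false by lia.
  case: (vcoord v n.+2); case: (vcoord v n.+3); rewrite /b2z /=; nia.
- rewrite flip_decomp /= ?eqxx; try lia.
  rewrite /f fpolyS /= -/n -/S ha hb.
  have -> : (n == n.+1) = false by lia.
  have -> : (n.+2 == n.+1) = false by lia.
  have -> : (n.+3 == n.+1) = false by lia.
  case: (vcoord v n.+2); case: (vcoord v n.+3); rewrite /b2z /=; nia.
Qed.
Lemma partB k (v : vertex (4 * k.+1 + 2)) :
  let n := (4 * k + 2)%N in
  vcoord v n.+2 -> vcoord v n.+3 ->
  f (vflip v n.+2) < f v /\ f (vflip v n.+3) < f v.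
Proof.
move=> n hc hd.
have HM := Mk_ge1 k.
set S := \sum_(i < n) b2z (vcoord v i).
have HS0 : 0 <= S by apply: sumr_ge0 => i _; case: (vcoord v i).
have HS1 : S <= n%:Z.
  have : S <= \sum_(i < n) 1 by apply: ler_sum => i _; case: (vcoord v i).
  by rewrite sumr_const card_ord -natz.
have Hn : 2 <= n%:Z by rewrite /n; lia.
split.
- rewrite flip_decomp /= ?eqxx; try lia.
  rewrite /f fpolyS /= -/n -/S hc hd.
  have -> : (n.+1 == n.+2) = false by lia.
  have -> : (n == n.+2) = false by lia.
  have -> : (n.+3 == n.+2) = false by lia.
  case: (vcoord v n); case: (vcoord v n.+1); rewrite /b2z /=; nia.
- rewrite flip_decomp /= ?eqxx; try lia.
  rewrite /f fpolyS /= -/n -/S hc hd.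
  have -> : (n == n.+3) = false by lia.
  have -> : (n.+2 == n.+3) = false by lia.
  have -> : (n.+1 == n.+3) = false by lia.
  case: (vcoord v n); case: (vcoord v n.+1); rewrite /b2z /=; nia.
Qed.

Lemma trap N (F : vertex N -> int) (p q : nat) :
  (p < N)%N -> (q < N)%N -> p != q ->
  (forall v : vertex N, vcoord v p -> vcoord v q ->
     F (vflip v p) < F v /\ F (vflip v q) < F v) ->
  forall s : seq (vertex N), increasing_path F s ->
  forall i j : nat, (i <= j < size s)%N ->
  vcoord (nth (vzero _) s i) p && vcoord (nth (vzero _) s i) q ->
  vcoord (nth (vzero _) s j) p && vcoord (nth (vzero _) s j) q.
Proof.
move=> hp hq pq loc s /(sortedP (vzero N)) hs i j /andP[hij hj] hi.
elim: j hij hj => [|j IH] hij hj.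
  by move: hi; have -> : i = 0%N by lia.
case: (leqP i j) => h; last by move: hi; have -> : i = j.+1 by lia.
have /andP[Hp Hq] := IH h (ltnW hj).
have /andP[/existsP[t /eqP Ew] Hlt] := hs j hj.
set v := nth (vzero N) s j in Hp Hq Ew Hlt *.
set w := nth (vzero N) s j.+1 in Ew Hlt *.
have [L1 L2] := loc v Hp Hq.
rewrite Ew !vcoord_flip //.
case: (eqVneq (nat_of_ord t) p) => [tp|tp].
  by move: Hlt; rewrite Ew tp => /(lt_trans L1); rewrite ltxx.
case: (eqVneq (nat_of_ord t) q) => [tq|tq].
  by move: Hlt; rewrite Ew tq => /(lt_trans L2); rewrite ltxx.
by rewrite -/v; move: tp tq; case: (p == t) (q == t) => /=; rewrite ?Hp ?Hq //; move/eqP. 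
Qed.

Theorem mainTheorem8 (k : nat) :
  let n := (4 * k + 2)%N in
  (* (a) *)
  ((forall v : vertex (4 * k.+1 + 2),
      vcoord v n -> vcoord v n.+1 ->
      f (vflip v n) < f v /\ f (vflip v n.+1) < f v)
   /\ (forall p : seq (vertex (4 * k.+1 + 2)), increasing_path (@f k.+1) p ->
      forall i j : nat, (i <= j < size p)%N ->
      vcoord (nth (vzero _) p i) n && vcoord (nth (vzero _) p i) n.+1 ->
      vcoord (nth (vzero _) p j) n && vcoord (nth (vzero _) p j) n.+1))
  /\
  (* (b) *)
  ((forall v : vertex (4 * k.+1 + 2),
      vcoord v n.+2 -> vcoord v n.+3 ->
      f (vflip v n.+2) < f v /\ f (vflip v n.+3) < f v)
   /\ (forall p : seq (vertex (4 * k.+1 + 2)), increasing_path (@f k.+1) p ->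
      forall i j : nat, (i <= j < size p)%N ->
      vcoord (nth (vzero _) p i) n.+2 && vcoord (nth (vzero _) p i) n.+3 ->
      vcoord (nth (vzero _) p j) n.+2 && vcoord (nth (vzero _) p j) n.+3)).
Proof.
move=> n; split; split.
- exact: partA.
- apply: (@trap _ (@f k.+1) n n.+1); [rewrite /n; lia | rewrite /n; lia | (rewrite /n; apply/eqP; lia) | exact: partA].
- exact: partB.
- apply: (@trap _ (@f k.+1) n.+2 n.+3); [rewrite /n; lia | rewrite /n; lia | (rewrite /n; apply/eqP; lia) | exact: partB].
Qed.
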